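(* Let $A\in\mathbb{R}^{n\times n}$ and $b\in\mathbb{R}^n$, and consider the generalized Newton method (GNM) for the absolute value equation $Ax-|x|-b=0$: starting from an arbitrary $x^0\in\mathbb{R}^n$, compute $x^{k+1}=[A-\mathcal{D}(x^k)]^{-1}b$ for $k=0,1,2,\dots$. Suppose that $A$ satisfies either (a) $A-I$ is an $M$-matrix, or (b) $\mathcal{N}(A^\top-I)=\mathrm{span}(v)$ for some vector $v>0$, and $A-I+D$ is an $M$-matrix for every diagonal matrix $D=\mathrm{diag}(d)$ with $d\ge 0$ and $d\neq 0$. If $A$ satisfies (b), assume in addition that $\mathcal{D}(x^0)\neq I$ and $v^\top b<0$. Then $A-\mathcal{D}(x^k)$ is an $M$-matrix for every $k=0,1,2,\dots$, and hence the GNM iteration is well defined.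
   Context: For $x\in\mathbb{R}^n$, $|x|=(|x_1|,\dots,|x_n|)^\top$, and $\mathcal{D}(x)=\mathrm{diag}(\mathrm{sign}(x))$, where $\mathrm{sign}(x)$ is the vector whose $i$th component is $-1$, $0$, or $1$ according as $x_i<0$, $x_i=0$, or $x_i>0$. A matrix is a $Z$-matrix if all its off-diagonal entries are $\le 0$; a $Z$-matrix $A$ is an $M$-matrix if $A$ is nonsingular and $A^{-1}\ge 0$ (entrywise). Vector and matrix inequalities are entrywise; $v>0$ means all entries of $v$ are strictly positive. $\mathcal{N}(X)$ denotes the null space of $X$. *)

(* Defs.v *)
From HB Require Import structures.
From mathcomp Require Import all_boot all_order all_algebra.
Set Implicit Arguments. Unset Strict Implicit. Unset Printing Implicit Defensive.
Import Order.TTheory GRing.Theory Num.Theory.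
Local Open Scope ring_scope.

Definition Dsgn (R : realFieldType) (n : nat) (x : 'cV[R]_n) : 'M[R]_n :=
  diag_mx (\row_i Num.sg (x i 0)).

Definition Zmatrix (R : realFieldType) (n : nat) (A : 'M[R]_n) : Prop :=
  forall i j : 'I_n, i != j -> A i j <= 0.

Definition Mmatrix (R : realFieldType) (n : nat) (A : 'M[R]_n) : Prop :=
  [/\ Zmatrix A, A \in unitmx & forall i j : 'I_n, 0 <= (invmx A) i j].

Definition nullsp (R : realFieldType) (n : nat) (X : 'M[R]_n) (u : 'cV[R]_n) : Prop :=
  X *m u = 0.

Definition span1 (R : realFieldType) (n : nat) (v : 'cV[R]_n) (u : 'cV[R]_n) : Prop :=
  exists c : R, u = c *: v.

Fixpoint gnm (R : realFieldType) (n : nat) (A : 'M[R]_n) (b x0 : 'cV[R]_n) (k : nat)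
  : 'cV[R]_n :=
  match k with
  | 0 => x0
  | k'.+1 => invmx (A - Dsgn (gnm A b x0 k')) *m b
  end.

(* Main.v *)
Require Import Defs.
From HB Require Import structures.
From mathcomp Require Import all_boot all_order all_algebra.
From mathcomp Require Import ring lra.
Import Order.TTheory GRing.Theory Num.Theory.
Local Open Scope ring_scope.

Lemma Z_mono (R : realFieldType) n (M : 'M[R]_n) (x y : 'cV[R]_n) :
  Zmatrix M -> (forall i, 0 < x i 0) -> (forall i, 0 < (M *m x) i 0) ->
  (forall i, 0 <= (M *m y) i 0) -> forall i, 0 <= y i 0.
Proof.
move=> HZ Hx HMx HMy i0; rewrite leNgt; apply/negP => Hy0.
pose F := fun j => y j 0 / x j 0.
case: (@arg_minP _ R _ i0 predT F isT) => i _ Hmin.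
set t := F i in Hmin.
have Ht0 : t < 0.
  apply: (le_lt_trans (Hmin i0 isT)).
  rewrite /F -(ltr_pM2r (Hx i0)) divfK ?mul0r //; exact: lt0r_neq0.
have Hle : (M *m y) i 0 <= t * (M *m x) i 0.
  rewrite !mxE mulr_sumr; apply: ler_sum => j _.
  case: (eqVneq i j) => [<-|ne].
    rewrite /t /F mulrCA divfK //; exact: lt0r_neq0.
  have hMij := HZ _ _ ne.
  have htj : t * x j 0 <= y j 0 by rewrite -ler_pdivlMr ?Hx //; exact: (Hmin j isT).
  have -> : t * (M i j * x j 0) = M i j * (t * x j 0) by ring.
  nra.
have := HMy i; have := HMx i; nra.
Qed.

Lemma Z_semipos_M (R : realFieldType) n (M : 'M[R]_n) (x : 'cV[R]_n) :
  Zmatrix M -> (forall i, 0 < x i 0) -> (forall i, 0 < (M *m x) i 0) -> Mmatrix M.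
Proof.
move=> HZ Hx HMx.
have mono := fun y => @Z_mono _ _ M x y HZ Hx HMx.
have Hu : M \in unitmx.
  rewrite -unitmx_tr -row_free_unit; apply: inj_row_free => v Hv.
  have H0 : M *m v^T = 0 by rewrite -[M]trmxK -trmx_mul Hv trmx0.
  apply/matrixP => a b; rewrite (ord1 a) [RHS]mxE.
  have h1 := mono v^T; have h2 := mono (- v^T).
  have e1 : 0 <= v^T b 0 by apply: h1 => i; rewrite H0 mxE.
  have e2 : 0 <= (- v^T) b 0 by apply: h2 => i; rewrite mulmxN H0 oppr0 mxE.
  move: e1 e2; rewrite !mxE => e1 e2; lra.
split => //.
move=> i j.
have Hc : M *m col j (invmx M) = delta_mx j 0.
  by rewrite colE mulmxA mulmxV // mul1mx.
have := mono (col j (invmx M)); rewrite Hc => h.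
have := h _ i; rewrite mxE; apply => k; by rewrite mxE ler0n.
Qed.

Lemma M_semipos (R : realFieldType) n (M : 'M[R]_n) :
  Mmatrix M -> exists x : 'cV[R]_n, (forall i, 0 < x i 0) /\ (forall i, 0 < (M *m x) i 0).
Proof.
case=> HZ Hu Hinv.
exists (invmx M *m const_mx 1); split; last first.
  by move=> i; rewrite mulmxA mulmxV // mul1mx mxE ltr01.
move=> i; rewrite mxE lt_def; apply/andP; split; last first.
  by apply: sumr_ge0 => j _; rewrite mxE mulr1.
apply/eqP => Hs.
have Hnn : forall j : ordinal n, true -> 0 <= invmx M i j * (const_mx 1 : 'cV[R]_n) j 0.
  by move=> j Hj; rewrite mxE mulr1.
have Z := psumr_eq0P Hnn Hs.
have : (invmx M *m M) i i = 0.
  rewrite mxE; apply: big1 => j Hj.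
  have := Z j isT; rewrite mxE mulr1 => ->; by rewrite mul0r.
rewrite mulVmx // mxE eqxx mulr1n => /eqP; by rewrite oner_eq0.
Qed.

Lemma M_add_diag (R : realFieldType) n (M : 'M[R]_n) (d : 'rV[R]_n) :
  Mmatrix M -> (forall i, 0 <= d 0 i) -> Mmatrix (M + diag_mx d).
Proof.
move=> HM Hd.
have [x [Hx HMx]] := @M_semipos _ _ M HM.
case: HM => HZ _ _.
apply: (@Z_semipos_M _ _ _ x) => //.
  move=> i j ne; rewrite !mxE (negbTE ne) mulr0n addr0; exact: HZ.
move=> i.
have -> : ((M + diag_mx d) *m x) i 0 = (M *m x) i 0 + d 0 i * x i 0.
  by rewrite mulmxDl mul_diag_mx !mxE.
have := HMx i; have := Hd i; have := Hx i; nra.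
Qed.

Lemma Dsgn_diag (R : realFieldType) n (x : 'cV[R]_n) :
  1%:M - Dsgn x = diag_mx (\row_i (1 - Num.sg (x i 0))).
Proof.
apply: (iffLR (matrixP _ _)) => a c; rewrite /Dsgn !mxE.
by rewrite mulrnBl.
Qed.

Lemma Dsgn_dec (R : realFieldType) n (A : 'M[R]_n) (x : 'cV[R]_n) :
  A - Dsgn x = A - 1%:M + diag_mx (\row_i (1 - Num.sg (x i 0))).
Proof. by rewrite -Dsgn_diag addrA subrK. Qed.

Lemma sg_le1 (R : realFieldType) (a : R) : 0 <= 1 - Num.sg a.
Proof. case: sgrP => _; lra. Qed.

Theorem lemma3p1 (R : realFieldType) (n : nat) (A : 'M[R]_n) (b x0 : 'cV[R]_n) :
  (Mmatrix (A - 1%:M)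
   \/ exists v : 'cV[R]_n,
        [/\ (forall u : 'cV[R]_n, nullsp (A^T - 1%:M) u <-> span1 v u),
            (forall i : 'I_n, 0 < v i 0),
            (forall d : 'rV[R]_n, (forall i : 'I_n, 0 <= d 0 i) -> d != 0 ->
               Mmatrix (A - 1%:M + diag_mx d)),
            Dsgn x0 != 1%:M
          & (v^T *m b) 0 0 < 0]) ->
  forall k : nat, Mmatrix (A - Dsgn (gnm A b x0 k)).
Proof.
case=> [HM|[v [H1 H2 H3 H4 H5]]] k.
  rewrite Dsgn_dec; apply: M_add_diag => // i; rewrite mxE; exact: sg_le1.
have key : forall x : 'cV[R]_n, Dsgn x != 1%:M -> Mmatrix (A - Dsgn x).
  move=> x Hx; rewrite Dsgn_dec; apply: H3.
    by move=> i; rewrite mxE; exact: sg_le1.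
  apply/eqP => Hd0; move/eqP: Hx; apply.
  apply: esym; apply: subr0_eq; have D0 : diag_mx (0 : 'rV[R]_n) = 0.
    by apply: (iffLR (matrixP _ _)) => a c; rewrite !mxE mul0rn.
  by rewrite Dsgn_diag Hd0 D0.
have vTA : v^T *m A = v^T.
  have [_ h] := H1 v.
  have := h (ex_intro _ 1 (esym (scale1r v))).
  rewrite /nullsp mulmxBl mul1mx => /subr0_eq Hv.
  by rewrite -[A]trmxK -trmx_mul Hv.
elim: k => [|k IH] /=; first exact: key.
apply: key; apply/eqP => HD.
set D' := Dsgn (gnm A b x0 k) in IH *.
set x := invmx (A - D') *m b in HD *.
have [_ Hu _] := IH.
have Hb : (A - D') *m x = b by rewrite /x mulmxA mulmxV // mul1mx.
have Hpos : forall i, 0 < x i 0.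
  move=> i; have := congr1 (fun M : 'M[R]_n => M i i) HD.
  rewrite /Dsgn !mxE eqxx !mulr1n => /eqP; by rewrite sgr_cp0.
clearbody x; move: H5; rewrite -Hb /D' Dsgn_dec mulmxDl mulmxDr mulmxA mulmxBr vTA mulmx1 subrr mul0mx add0r.
rewrite mxE ltNge => /negP; apply.
apply: sumr_ge0 => j _; rewrite mul_diag_mx !mxE.
apply: mulr_ge0; first exact: ltW. apply: mulr_ge0; first exact: sg_le1. exact: ltW.
Qed.
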